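(* Let $\mathcal I$ and $\mathcal J$ be ideals on $\omega$ and let $X$ be a nonempty topological space. The following are equivalent: (1) $\mathcal I\subseteq\mathcal J$; (2) for every sequence $(f_n)$ in $\mathcal C(X)$: if $f_n\to0$ $\mathcal I$-uniformly then $f_n\to0$ $\mathcal J$-$\sigma$-uniformly; (3) for every $(f_n)$ in $\mathcal C(X)$: $\mathcal I$-uniform convergence to $0$ implies $\mathcal J$-quasi-normal convergence to $0$; (4) for every $(f_n)$ in $\mathcal C(X)$: $\mathcal I$-$\sigma$-uniform convergence to $0$ implies $\mathcal J$-quasi-normal convergence to $0$; (5) for every $(f_n)$ in $\mathcal C(X)$: $\mathcal I$-$\sigma$-uniform convergence to $0$ implies $\mathcal J$-pointwise convergence to $0$; (6) for every $(f_n)$ in $\mathcal C(X)$: $\mathcal I$-uniform convergence to $0$ implies $\mathcal J$-pointwise convergence to $0$; (7) for every $(f_n)$ in $\mathcal C(X)$: $\mathcal I$-quasi-normal convergence to $0$ implies $\mathcal J$-pointwise convergence to $0$.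
   Context: An ideal on $\omega$ is a family $\mathcal I\subseteq\mathcal P(\omega)$ closed under finite unions and subsets, containing all finite sets, with $\omega\notin\mathcal I$. A real sequence $(a_n)$ is $\mathcal I$-convergent to $0$ if $\{n:|a_n|\ge\varepsilon\}\in\mathcal I$ for all $\varepsilon>0$. For a sequence $(f_n)$ of real functions on a set $X$: $\mathcal I$-pointwise convergence to $0$ means $(f_n(x))$ is $\mathcal I$-convergent to $0$ for each $x$; $\mathcal I$-uniform means $\{n:\exists x\in X\,(|f_n(x)|\ge\varepsilon)\}\in\mathcal I$ for each $\varepsilon>0$; $\mathcal I$-$\sigma$-uniform means $X=\bigcup_{k\in\omega}X_k$ with $(f_n\restriction X_k)$ $\mathcal I$-uniformly convergent to $0$ for each $k$; $\mathcal I$-quasi-normal means there is a sequence $(\varepsilon_n)$ of positive reals $\mathcal I$-convergent to $0$ with $\{n:|f_n(x)|\ge\varepsilon_n\}\in\mathcal I$ for each $x$. $\mathcal C(X)$ = continuous real functions on $X$. *)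

(* Defs.v *)
From HB Require Import structures.
From mathcomp Require Import all_boot all_order all_algebra.
From mathcomp Require Import all_classical all_reals all_analysis.
From mathcomp Require Import Rstruct Rstruct_topology.
From Stdlib Require Import Reals.
Set Implicit Arguments. Unset Strict Implicit. Unset Printing Implicit Defensive.
Import Order.TTheory GRing.Theory Num.Theory.
Local Open Scope classical_set_scope.
Local Open Scope ring_scope.

Notation Rl := Rdefinitions.R.

Definition is_ideal (I : set (set nat)) : Prop :=
  (forall A B, I A -> I B -> I (A `|` B)) /\
  (forall A B, B `<=` A -> I A -> I B) /\
  (forall A : set nat, finite_set A -> I A) /\
  ~ I setT.

Definition Iconv0 (I : set (set nat)) (a : nat -> Rl) : Prop :=
  forall eps : Rl, 0 < eps -> I [set n | eps <= `|a n|].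

Definition Cfun (X : topologicalType) (f : X -> Rl) : Prop := continuous f.

Definition I_pointwise (X : Type) (I : set (set nat)) (f : nat -> X -> Rl) :=
  forall x : X, Iconv0 I (fun n => f n x).

Definition I_uniform_on (X : Type) (I : set (set nat)) (f : nat -> X -> Rl)
    (Y : set X) :=
  forall eps : Rl, 0 < eps -> I [set n | exists2 x, Y x & eps <= `|f n x|].

Definition I_uniform (X : Type) (I : set (set nat)) (f : nat -> X -> Rl) :=
  I_uniform_on I f setT.

Definition I_sigma_uniform (X : Type) (I : set (set nat)) (f : nat -> X -> Rl) :=
  exists Xk : nat -> set X, (\bigcup_k Xk k = setT) /\
    forall k, I_uniform_on I f (Xk k).

Definition I_quasi_normal (X : Type) (I : set (set nat)) (f : nat -> X -> Rl) :=
  exists e : nat -> Rl, (forall n, 0 < e n) /\ Iconv0 I e /\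
    forall x : X, I [set n | e n <= `|f n x|].

(* Main.v *)
Require Import Defs.
From HB Require Import structures.
From mathcomp Require Import all_boot all_order all_algebra.
From mathcomp Require Import all_classical all_reals all_analysis.
From mathcomp Require Import Rstruct Rstruct_topology.
From mathcomp Require Import lra.
Set Implicit Arguments. Unset Strict Implicit. Unset Printing Implicit Defensive.
Import Order.TTheory GRing.Theory Num.Theory.
Local Open Scope classical_set_scope.
Local Open Scope ring_scope.

Lemma ideal_bigU (K : set (set nat)) (U : nat -> set nat) : is_ideal K ->
  (forall k, K (U k)) -> forall N, K [set n | exists2 k, (k < N)%N & U k n].
Proof.
move=> [hU [hD [hF hT]]] hK; elim=> [|N IH].
  apply: hD (hF _ (finite_set0 nat)) => n [k]; by [].
apply: (hD _ _ _ (hU _ _ IH (hK N))) => n [k].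
rewrite ltnS leq_eqVlt => /orP[/eqP -> |kN] Ukn; [by right|by left; exists k].
Qed.

Lemma small_idx (eps : Rl) (N n : nat) : 0 < eps -> 8 / eps < N%:R ->
  eps / 8 <= (n.+1%:R)^-1 -> (n < N)%N.
Proof.
move=> e0 hN hn.
have a0 : 0 < (n.+1%:R : Rl) by rewrite ltr0n.

rewrite ltr_pdivrMr // in hN.
have h2 : eps / 8 * n.+1%:R <= 1.
  by rewrite -ler_pdivlMr // mul1r.
have h3 : eps * n.+1%:R <= 8 by clear hn; lra.
have h4 : eps * n.+1%:R < eps * N%:R by clear hn; lra.
move: h4; rewrite ltr_pM2l //.
by rewrite ltr_nat => /ltnW.
Qed.

Section Gen.
Variable X : Type.
Variable K : set (set nat).
Hypothesis hK : is_ideal K.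

Lemma unif_sigma (f : nat -> X -> Rl) : I_uniform K f -> I_sigma_uniform K f.
Proof. by move=> H; exists (fun _ => setT); split => //; rewrite bigcup_const. Qed.

Lemma QN_pw (f : nat -> X -> Rl) : I_quasi_normal K f -> I_pointwise K f.
Proof.
case: hK => [hU [hD _]] [e [e0 [ec ef]]] x eps eps0.
apply: (hD _ _ _ (hU _ _ (ef x) (ec eps eps0))) => n /= H.
case: (leP eps (`|e n|)) => h; [by right|left].
rewrite gtr0_norm ?e0 // in h; apply: le_trans H; exact: ltW.
Qed.

Lemma sigma_QN (x0 : X) (f : nat -> X -> Rl) :
  I_sigma_uniform K f -> I_quasi_normal K f.
Proof.
move=> [Xk [cov hu]].
have inX : forall x, exists k, Xk k x.
  move=> x; have : (\bigcup_k Xk k) x by rewrite cov.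
  by case=> k _ ?; exists k.
pose c (k : nat) : Rl := (k.+1%:R)^-1.
have c0 : forall k, 0 < c k by move=> k; rewrite invr_gt0 ltr0n.
have c1 : forall k, c k <= 1 by move=> k; rewrite invf_le1 ?ltr0n // ler1n.
pose S n := [set y : Rl | exists k, exists2 x, Xk k x & y = Num.min (c k) `|f n x|].
have hS : forall n, has_sup (S n).
  move=> n; split.
    case: (inX x0) => k hk; exists (Num.min (c k) `|f n x0|); exists k; by exists x0.
  exists 1 => y [k [x _ ->]]; rewrite ge_min c1 //.
have supge : forall n k x, Xk k x -> Num.min (c k) `|f n x| <= sup (S n).
  move=> n k x hx; apply: sup_upper_bound (hS n) _ _; exists k; by exists x.
pose e n := 2 * sup (S n) + c n.
have sup0 : forall n, 0 <= sup (S n).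
  move=> n; case: (inX x0) => k hk; apply: le_trans (supge n k x0 hk).
  by rewrite le_min (ltW (c0 k)) normr_ge0.
exists e; split; [|split].
- move=> n; rewrite /e; have := sup0 n; have := c0 n; lra.
- move=> eps eps0.
  have [N hN] : exists N : nat, 8 / eps < N%:R.
    exists (Num.Def.archi_bound (8/eps)); apply: archi_boundP.
    by rewrite divr_ge0 // ltW.
  case: hK => [hU [hD [hF _]]].
  pose U k := [set n | exists2 x, Xk k x & eps / 8 <= `|f n x|].
  have hUk : forall k, K (U k) by move=> k; apply: hu; lra.
  apply: (hD _ _ _ (hU _ _ (hF _ (finite_II N)) (ideal_bigU hK hUk N))).
  move=> n /= hn.
  case: (leP (eps / 8) (c n)) => hcn.
    by left; rewrite /= (small_idx eps0 hN hcn).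
  right.
  have hsup : eps / 4 < sup (S n).
    move: hn; rewrite /e ger0_norm; [|have := sup0 n; have := c0 n; lra].
    lra.
  have e8 : 0 < eps / 8 by lra.
  have [y [k [x hx ->]] hy] := @sup_adherent _ (S n) (eps / 8) e8 (hS n).
  have : eps / 8 < Num.min (c k) `|f n x| by apply: lt_trans hy; lra.
  rewrite lt_min => /andP[hck hfx].
  exists k; first by apply: small_idx eps0 hN (ltW hck).
  exists x => //; exact: ltW.
- move=> x; case: (inX x) => k hk.
  case: hK => [hU [hD _]].
  apply: (hD _ _ _ (hu k (c k) (c0 k))) => n /= hn.
  exists x => //.
  case: (leP (c k) `|f n x|) => // hlt.
  exfalso.
  have := supge n k x hk; rewrite (min_r (ltW hlt)).
  move: hn; rewrite /e; have := c0 n; have := normr_ge0 (f n x); lra.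
Qed.

End Gen.

Lemma mono_unif_on X (I J : set (set nat)) (f : nat -> X -> Rl) Y :
  I `<=` J -> I_uniform_on I f Y -> I_uniform_on J f Y.
Proof. by move=> IJ H eps e0; apply: IJ; apply: H. Qed.

Lemma mono_QN X (I J : set (set nat)) (f : nat -> X -> Rl) :
  I `<=` J -> I_quasi_normal I f -> I_quasi_normal J f.
Proof.
move=> IJ [e [e0 [ec ef]]]; exists e; split => //; split.
  by move=> eps h; apply: IJ; apply: ec.
by move=> x; apply: IJ.
Qed.

Lemma mono_pw X (I J : set (set nat)) (f : nat -> X -> Rl) :
  I `<=` J -> I_pointwise I f -> I_pointwise J f.
Proof. by move=> IJ H x eps h; apply: IJ; apply: H. Qed.

Definition ind (X : Type) (A : set nat) (n : nat) (x : X) : Rl :=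
  if asbool (A n) then 1 else 0.

Lemma ind_cont (X : topologicalType) A n : Cfun (@ind X A n).
Proof. exact: cst_continuous. Qed.

Lemma ind_unif X (K : set (set nat)) A : is_ideal K -> K A ->
  I_uniform K (@ind X A).
Proof.
move=> [_ [hD _]] KA eps e0; apply: hD KA => n [x _].
rewrite /ind; case: asboolP => // _; rewrite normr0 => h.
by move: (lt_le_trans e0 h); rewrite ltxx.
Qed.

Lemma pw_ind X (x0 : X) (J : set (set nat)) A : is_ideal J ->
  I_pointwise J (@ind X A) -> J A.
Proof.
move=> [_ [hD _]] H; apply: hD (H x0 1 ltr01) => n An /=.
by rewrite /ind; case: asboolP => // _; rewrite normr1.
Qed.

Theorem proposition3p2 (I J : set (set nat)) (X : topologicalType) (x0 : X) :
  is_ideal I -> is_ideal J ->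
  let all_C (P : (nat -> X -> Rl) -> Prop) :=
    forall f : nat -> X -> Rl, (forall n, Cfun (f n)) -> P f in
  ((I `<=` J) <-> all_C (fun f => I_uniform I f -> I_sigma_uniform J f)) /\
  ((I `<=` J) <-> all_C (fun f => I_uniform I f -> I_quasi_normal J f)) /\
  ((I `<=` J) <-> all_C (fun f => I_sigma_uniform I f -> I_quasi_normal J f)) /\
  ((I `<=` J) <-> all_C (fun f => I_sigma_uniform I f -> I_pointwise J f)) /\
  ((I `<=` J) <-> all_C (fun f => I_uniform I f -> I_pointwise J f)) /\
  ((I `<=` J) <-> all_C (fun f => I_quasi_normal I f -> I_pointwise J f)).
Proof.
move=> hI hJ all_C; rewrite /all_C.
have Uni : forall A, I A -> I_uniform I (@ind X A) by move=> A; exact: ind_unif.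
have Sig : forall A, I A -> I_sigma_uniform I (@ind X A).
  by move=> A /Uni; exact: unif_sigma.
have QNI : forall A, I A -> I_quasi_normal I (@ind X A).
  by move=> A /Sig; exact: sigma_QN.
have PW := pw_ind x0 hJ.
have sigpw : forall f : nat -> X -> Rl, I_sigma_uniform J f -> I_pointwise J f.
  by move=> f /(sigma_QN hJ x0); exact: QN_pw.
split; [|split; [|split; [|split; [|split]]]]; split.
- move=> IJ f _ /(mono_unif_on IJ); exact: unif_sigma.
- by move=> H A /[dup] IA /Uni /(H _ (@ind_cont X A)) /sigpw /PW.
- move=> IJ f _ /unif_sigma /(sigma_QN hI x0); exact: mono_QN.
- by move=> H A /[dup] IA /Uni /(H _ (@ind_cont X A)) /(QN_pw hJ) /PW.
- move=> IJ f _ /(sigma_QN hI x0); exact: mono_QN.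
- by move=> H A /[dup] IA /Sig /(H _ (@ind_cont X A)) /(QN_pw hJ) /PW.
- move=> IJ f _ /(sigma_QN hI x0) /(QN_pw hI); exact: mono_pw.
- by move=> H A /[dup] IA /Sig /(H _ (@ind_cont X A)) /PW.
- move=> IJ f _ /unif_sigma /(sigma_QN hI x0) /(QN_pw hI); exact: mono_pw.
- by move=> H A /[dup] IA /Uni /(H _ (@ind_cont X A)) /PW.
- move=> IJ f _ /(QN_pw hI); exact: mono_pw.
- by move=> H A /[dup] IA /QNI /(H _ (@ind_cont X A)) /PW.
Qed.
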